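(* For every integer $s\geqslant2$, \[P(B_{3,s,3})=-\sum_{\mathrm S_1,\mathrm S_2,\mathrm S_3}(-1)^{\#\mathrm S_1+\#\mathrm S_2+\#\mathrm S_3}\,2^{-|T_1|}\,4^{-|T_{2-3}|},\] where the sum is over all ordered triples of nonempty sets of pairwise distinct paths from the centre to the boundary. The sets $T_1$, $T_{2-3}$, the notation $\#\mathrm S$ and the event $B_{3,s,3}$ are defined in the context.
   Context: Consider the tiling of the plane by regular hexagons of side $1$, called cells. For an integer $s\geqslant2$, fix a cell $O$. Let $M_s$ be the set of all cells lying inside the regular hexagon that is centred at the centre of $O$, has sides of length $s\sqrt3$, and has its sides perpendicular to sides of the cells. The set $M_s$ has $m+1=1+3s(s-1)$ cells. Number the cells other than $O$ as $v_1,\dots,v_m$. Two cells are neighbours if they share a side. A cell of $M_s$ is a boundary cell if it has fewer than six neighbours in $M_s$. A path from the centre to the boundary is a sequence of pairwise distinct cells $v_{j_1},\dots,v_{j_t}$ with the following properties: - $v_{j_1}$ is a neighbour of $O$; - $v_{j_l}$ and $v_{j_{l+1}}$ are neighbours for each $l$; - $v_{j_t}$ is a boundary cell. For a nonempty set $\mathrm S=\{s_1,\dots,s_k\}$ of pairwise distinct paths, define $\#\mathrm S=k$ and $\mathrm{Cells}(\mathrm S)=s_1\cup\dots\cup s_k$, the set of cells used. For a triple $(\mathrm S_1,\mathrm S_2,\mathrm S_3)$: - $T_1$ is the set of cells belonging to exactly one of $\mathrm{Cells}(\mathrm S_1),\mathrm{Cells}(\mathrm S_2),\mathrm{Cells}(\mathrm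 S_3)$; - $T_{2-3}$ is the set of cells belonging to at least two of them. Let $\Omega_{3,s}$ be the set of triples $(f_1,f_2,f_3)$ of functions $\{v_1,\dots,v_m\}\to\{0,1\}$ with $f_1+f_2+f_3\equiv1\pmod2$ at every cell, with the uniform probability measure. Fluid $i$ flows if some path from the centre to the boundary has $f_i=1$ on all its cells. $B_{3,s,3}$ is the event that all three fluids flow. *)

(* Defs.v *)
From mathcomp Require Import all_boot all_order all_algebra.
Set Implicit Arguments. Unset Strict Implicit. Unset Printing Implicit Defensive.
Import Order.TTheory GRing.Theory Num.Theory.

(* Cells of the hexagonal tiling are identified with axial coordinates
   (q, r) in Z^2; the six neighbours of (q,r) are (q+-1,r), (q,r+-1),
   (q+1,r-1), (q-1,r+1).  The cells of M_s are
   those at hex distance <= s-1 from O, i.e. |q|,|r|,|q+r| <= s-1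
   (1 + 3s(s-1) cells).  We store a cell of the box |q|,|r| <= s-1 as a pair
   of ordinals (x,y) : 'I_(2s-1) * 'I_(2s-1), with q = x-(s-1), r = y-(s-1). *)

Definition box (s : nat) : finType := ('I_(2 * s - 1) * 'I_(2 * s - 1))%type.

Definition axq (s : nat) (c : box s) : int := (c.1 : nat)%:Z - (s - 1)%:Z.
Definition axr (s : nat) (c : box s) : int := (c.2 : nat)%:Z - (s - 1)%:Z.

Definition inM (s : nat) (c : box s) : bool :=
  [&& `|axq c| <= (s - 1)%:Z, `|axr c| <= (s - 1)%:Z
    & `|axq c + axr c| <= (s - 1)%:Z]%R.

Definition isO (s : nat) (c : box s) : bool := (axq c == 0) && (axr c == 0).

Definition adj (s : nat) (c d : box s) : bool :=
  let dq := (axq d - axq c)%R in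
  let dr := (axr d - axr c)%R in
  [|| (dq == 1) && (dr == 0), (dq == -1) && (dr == 0),
      (dq == 0) && (dr == 1), (dq == 0) && (dr == -1),
      (dq == 1) && (dr == -1) | (dq == -1) && (dr == 1)]%R.

Definition boundary (s : nat) (c : box s) : bool :=
  #|[set d : box s | inM d && adj c d]| < 6.

Definition V (s : nat) : finType := {c : box s | inM c && ~~ isO c}.

Definition is_cpath (s : nat) (p : seq (V s)) : bool :=
  match p with
  | [::] => false
  | v :: p' =>
      [&& uniq p,
          [exists o : box s, isO o && adj o (val v)],
          path (fun a b : V s => adj (val a) (val b)) v p'
        & boundary (val (last v p'))]
  end.

(* paths are pairwise distinct, hence of length <= m = #|V s|; the finite
   type of all paths from the centre to the boundary *)
Definition Seqs (s : nat) : finType := {k : 'I_(#|V s|).+1 & k.-tuple (V s)}.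
Definition Path (s : nat) : finType := {t : Seqs s | is_cpath (tagged t)}.
Definition pseq (s : nat) (p : Path s) : seq (V s) := tagged (val p).

Definition Cells (s : nat) (S : {set Path s}) : {set V s} :=
  \bigcup_(p in S) [set x | x \in pseq p].

Definition mult (s : nat) (S1 S2 S3 : {set Path s}) (x : V s) : nat :=
  (x \in Cells S1) + (x \in Cells S2) + (x \in Cells S3).

Definition T1 (s : nat) (S1 S2 S3 : {set Path s}) : {set V s} :=
  [set x | mult S1 S2 S3 x == 1].
Definition T23 (s : nat) (S1 S2 S3 : {set Path s}) : {set V s} :=
  [set x | 2 <= mult S1 S2 S3 x].

Definition Conf (s : nat) :=
  ({ffun V s -> bool} * {ffun V s -> bool} * {ffun V s -> bool})%type.

Definition Omega (s : nat) : {set Conf s} :=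
  [set w : Conf s | [forall x, odd (w.1.1 x + w.1.2 x + w.2 x)]].

Definition flows (s : nat) (f : {ffun V s -> bool}) : bool :=
  [exists p : Path s, all (fun x => f x) (pseq p)].

Definition B333 (s : nat) : {set Conf s} :=
  [set w in Omega s | [&& flows w.1.1, flows w.1.2 & flows w.2]].

Definition Prob (s : nat) (E : {set Conf s}) : rat :=
  (#|E :&: Omega s|%:R / #|Omega s|%:R)%R.

(* Main.v *)
Require Import Defs.
From mathcomp Require Import all_boot all_order all_algebra.
From mathcomp Require Import ring.
Import GRing.Theory Num.Theory.
Set Implicit Arguments. Unset Strict Implicit.
Local Open Scope ring_scope.

Lemma alt_sum (T : finType) (A : {set T}) :
  \sum_(S : {set T}) (S \subset A)%:R * (-1) ^+ #|S| = (A == set0)%:R :> rat.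
Proof.
have [->|/set0Pn [a aA]] := eqVneq A set0.
  rewrite (bigD1 set0) //= sub0set cards0 expr0 mulr1 big1 ?addr0 //.
  by move=> S /negPf SN; rewrite subset0 SN mul0r.
set G := fun S : {set T} => (S \subset A)%:R * (-1) ^+ #|S| : rat.
pose t := fun S : {set T} => if a \in S then S :\ a else a |: S.
have tK : involutive t.
  move=> S; rewrite /t; case: (boolP (a \in S)) => aS.
    by rewrite !inE eqxx /= setD1K.
  by rewrite setU11 setU1K.
have Gt S : G (t S) = - G S.
  rewrite /G /t; case: ifP => aS.
    rewrite (cardsD1 a S) aS /= add1n exprS mulN1r mulrN.
    rewrite opprK; have -> : (S \subset A) = (S :\ a \subset A) by rewrite -{1}(setD1K aS) subUset sub1set aA.
    done.
  rewrite cardsU1 aS /= add1n exprS mulN1r mulrN.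
  by rewrite subUset sub1set aA.
have H : \sum_S G S = - \sum_S G S.
  rewrite {1}(reindex_inj (can_inj tK)) /= -sumrN; by apply: eq_bigr => S _; rewrite Gt.
have : 2%:R * \sum_S G S = 0 by rewrite mulr2n mulrDl mul1r {1}H addNr.
by move/eqP; rewrite mulf_eq0 pnatr_eq0 /= => /eqP.
Qed.

Lemma forall_prod (T : finType) (P : pred T) :
  ([forall x, P x])%:R = \prod_x (P x)%:R :> rat.
Proof.
case: (boolP [forall x, P x]) => [/forallP H | /forallPn [x Px]].
  by rewrite big1 // => x _; rewrite H.
by rewrite (bigD1 x) //= (negPf Px) mul0r.
Qed.

Lemma subset_forall (T : finType) (A B : {set T}) :
  (A \subset B) = [forall x, (x \in A) ==> (x \in B)].
Proof.
apply/subsetP/forallP => H x; first by apply/implyP; apply: H.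
exact: (implyP (H x)).
Qed.

Lemma card_sumR (T : finType) (A : {set T}) :
  #|A|%:R = \sum_x (x \in A)%:R :> rat.
Proof.
rewrite -sum1_card natr_sum big_mkcond /=; apply: eq_bigr => x _.
by case: (x \in A).
Qed.

Definition onf s (f : {ffun V s -> bool}) (S : {set Path s}) : bool :=
  Cells S \subset [set x | f x].

Lemma L1 s (f : {ffun V s -> bool}) :
  (flows f)%:R = - \sum_(S : {set Path s} | S != set0) (-1) ^+ #|S| * (onf f S)%:R :> rat.
Proof.
pose A := [set p : Path s | all (fun x => f x) (pseq p)].
have onE S : onf f S = (S \subset A).
  rewrite /onf /Cells; apply/bigcupsP/subsetP => H p pS.
    rewrite inE; apply/allP => x xp.
    by have /subsetP := H p pS => /(_ x); rewrite !inE; apply.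
  by apply/subsetP => x; rewrite !inE; have := H p pS; rewrite inE => /allP; apply.
have flE : flows f = (A != set0).
  apply/existsP/set0Pn => [[p Hp]|[p Hp]]; exists p => //; first by rewrite inE.
  by rewrite inE in Hp.
have := alt_sum A; rewrite (bigD1 set0) //= sub0set cards0 expr0 mulr1.
move=> H; rewrite flE -[(A != set0)%:R]/((~~ (A == set0))%:R).
have -> : ((~~ (A == set0))%:R : rat) = 1 - (A == set0)%:R by case: (A == set0); rewrite ?subr0 ?subrr.
rewrite -H opprD addrA subrr add0r; congr (- _); apply: eq_bigr => S _; by rewrite onE mulrC.
Qed.

Lemma sum_bool3 (F : bool * bool * bool -> rat) :
  \sum_j F j = \sum_(a : bool) \sum_(b : bool) \sum_(c : bool) F (a, b, c).
Proof.
rewrite (eq_bigr (fun p => F (p.1, p.2))); last by case.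
rewrite -(pair_bigA _ (fun a b => F (a, b))) /=.
rewrite (eq_bigr (fun p => \sum_(c : bool) F (p.1, p.2, c))) /=; last by case.
by rewrite -(pair_bigA _ (fun a b => \sum_(c : bool) F (a, b, c))).
Qed.

Lemma cval (b1 b2 b3 : bool) :
  \sum_(j : bool * bool * bool) (odd (j.1.1 + j.1.2 + j.2))%:R * (b1 ==> j.1.1)%:R
     * (b2 ==> j.1.2)%:R * (b3 ==> j.2)%:R
  = 4%:R * (if (b1 + b2 + b3 == 1)%N then 2%:R^-1 else 1)
     * (if (2 <= b1 + b2 + b3)%N then 4%:R^-1 else 1) :> rat.
Proof.
rewrite sum_bool3 !big_bool /=.
by case: b1; case: b2; case: b3 => /=; rewrite ?mulr1 ?mul1r ?mulr0 ?mul0r ?addr0 ?add0r; apply/eqP; rewrite -subr_eq0; apply/eqP; field.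
Qed.

Lemma L2 s (C1 C2 C3 : {set V s}) :
 \sum_(w : Conf s) (w \in Omega s)%:R * (C1 \subset [set x | w.1.1 x])%:R
   * (C2 \subset [set x | w.1.2 x])%:R * (C3 \subset [set x | w.2 x])%:R
 = \prod_(x : V s) \sum_(j : bool*bool*bool) (odd (j.1.1 + j.1.2 + j.2))%:R
     * ((x \in C1) ==> j.1.1)%:R * ((x \in C2) ==> j.1.2)%:R * ((x \in C3) ==> j.2)%:R :> rat.
Proof.
rewrite bigA_distr_bigA /=.
pose phi := fun f : {ffun V s -> bool*bool*bool} =>
  (([ffun x => (f x).1.1], [ffun x => (f x).1.2]), [ffun x => (f x).2]) : Conf s.
pose psi := fun w : Conf s => [ffun x => (w.1.1 x, w.1.2 x, w.2 x)].
rewrite (reindex phi); last first.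
  exists psi => [f _|w _].
    by apply/ffunP => x; rewrite !ffunE; case: (f x) => [[]].
  case: w => [[f1 f2] f3]; rewrite /phi /psi /=.
  by congr (_, _, _); apply/ffunP => x; rewrite !ffunE.
apply: eq_bigr => f _.
rewrite inE forall_prod !subset_forall !forall_prod -!big_split /=.
by apply: eq_bigr => x _; rewrite !inE !ffunE.
Qed.

Lemma prod_if (T : finType) (A : {set T}) (a : rat) :
  \prod_x (if x \in A then a else 1) = a ^+ #|A|.
Proof. by rewrite -big_mkcond prodr_const. Qed.

Lemma L3 s (S1 S2 S3 : {set Path s}) :
 \sum_(w : Conf s) (w \in Omega s)%:R * (onf w.1.1 S1)%:R
   * (onf w.1.2 S2)%:R * (onf w.2 S3)%:R
 = 4%:R ^+ #|V s| * 2%:R ^- #|T1 S1 S2 S3| * 4%:R ^- #|T23 S1 S2 S3| :> rat.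
Proof.
rewrite /onf L2; under eq_bigr => x _ do rewrite cval.
rewrite !big_split /= prodr_const.
rewrite (eq_bigr (fun x => if x \in T1 S1 S2 S3 then 2%:R^-1 else 1)); last by move=> x _; rewrite inE.
rewrite [X in _ * X = _](eq_bigr (fun x => if x \in T23 S1 S2 S3 then 4%:R^-1 else 1)); last by move=> x _; rewrite inE.
by rewrite !prod_if !exprVn.
Qed.




Lemma C0 s : Cells (set0 : {set Path s}) = set0.
Proof. by rewrite /Cells big_set0. Qed.

Lemma HO s : #|Omega s|%:R = 4%:R ^+ #|V s| :> rat.
Proof.
  have := L3 (set0 : {set Path s}) set0 set0.
  have -> : T1 (set0 : {set Path s}) set0 set0 = set0.
    by apply/setP => x; rewrite !inE /mult C0 !inE.
  have -> : T23 (set0 : {set Path s}) set0 set0 = set0.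
    by apply/setP => x; rewrite !inE /mult C0 !inE.
  rewrite cards0 !expr0 invr1 !mulr1 => <-.
  rewrite card_sumR; apply: eq_bigr => w _.
  by rewrite /onf C0 !sub0set !mulr1.
Qed.



Lemma Bind s (w : Conf s) : ((w \in B333 s)%:R : rat) = (w \in Omega s)%:R * (flows w.1.1)%:R
        * (flows w.1.2)%:R * (flows w.2)%:R.
Proof.
rewrite /B333 in_set.
case: (w \in Omega s) => /=; last by rewrite !mul0r.
rewrite mul1r.
case: (flows w.1.1) => /=; last by rewrite !mul0r.
case: (flows w.1.2) => /=; last by rewrite mulr0 mul0r.
by case: (flows w.2); rewrite /= ?mulr1 ?mulr0.
Qed.

Lemma expand3 (I : finType) (P : pred I) (c : I -> nat) (a : rat) (g1 g2 g3 : I -> rat) :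
  a * (- \sum_(i | P i) (-1) ^+ c i * g1 i) * (- \sum_(j | P j) (-1) ^+ c j * g2 j)
    * (- \sum_(k | P k) (-1) ^+ c k * g3 k)
  = - \sum_(i | P i) \sum_(j | P j) \sum_(k | P k)
        (-1) ^+ (c i + c j + c k)%N * (a * g1 i * g2 j * g3 k).
Proof.
rewrite !(mulrN, mulNr, opprK); congr (- _).
rewrite -!mulrA mulr_suml mulr_sumr; apply: eq_bigr => i _.
rewrite mulr_suml !mulr_sumr; apply: eq_bigr => j _.
rewrite !mulr_sumr; apply: eq_bigr => k _.
rewrite !exprD; ring.
Qed.

Lemma HB s : #|B333 s|%:R = - \sum_(S1 : {set Path s} | S1 != set0)
      \sum_(S2 : {set Path s} | S2 != set0)
        \sum_(S3 : {set Path s} | S3 != set0)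
          (-1) ^+ (#|S1| + #|S2| + #|S3|)%N
          * (4%:R ^+ #|V s| * 2%:R ^- #|T1 S1 S2 S3| * 4%:R ^- #|T23 S1 S2 S3|) :> rat.
Proof.
rewrite card_sumR.
under eq_bigr => w _ do rewrite Bind !L1 expand3.
rewrite sumrN; congr (- _).
rewrite exchange_big; apply: eq_bigr => S1 _.
rewrite exchange_big; apply: eq_bigr => S2 _.
rewrite exchange_big; apply: eq_bigr => S3 _.
by rewrite -mulr_sumr L3.
Qed.



Lemma aux (e K a b : rat) : K != 0 -> e * (K * a * b) / K = e * a * b.
Proof. by move=> K0; field. Qed.

Theorem proposition2 (s : nat) (hs : (2 <= s)%N) :
  Prob (B333 s) =
  - \sum_(S1 : {set Path s} | S1 != set0)
      \sum_(S2 : {set Path s} | S2 != set0)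
        \sum_(S3 : {set Path s} | S3 != set0)
          (-1) ^+ (#|S1| + #|S2| + #|S3|)%N
          * (2%:R ^- #|T1 S1 S2 S3|) * (4%:R ^- #|T23 S1 S2 S3|).
Proof.
rewrite /Prob.
have sub : B333 s :&: Omega s = B333 s.
  by apply/setIidPl; apply/subsetP => w; rewrite inE => /andP[].
rewrite sub HB HO mulNr; congr (- _).
have K0 : (4%:R ^+ #|V s| : rat) != 0 by rewrite expf_eq0 pnatr_eq0 andbF.
rewrite mulr_suml; apply: eq_bigr => S1 _.
rewrite mulr_suml; apply: eq_bigr => S2 _.
rewrite mulr_suml; apply: eq_bigr => S3 _.
exact: aux.
Qed.
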